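(* (Fusion Theorem) For positive integers $\lambda,t,m,s,v$ with $2\le t\le ms$, $$OCAN_{\lambda}(t,m,s,v)\le OCAN_{\lambda}(t,m,s,v+1)-2.$$
   Context: For positive integers $m,s$, the RT poset $[m\times s]$ is the set $\{1,\ldots,ms\}$ partitioned into $m$ blocks $B_i=\{is+1,\ldots,(i+1)s\}$ ($i=0,\ldots,m-1$); each block is a chain under the usual order of the integers, and elements of different blocks are incomparable. An anti-ideal is the complement of an ideal (a down-closed set). Given an $N\times n$ array over an alphabet $V$ of size $v$, a set of $t$ columns is $\lambda$-covered if in the $N\times t$ subarray formed by those columns every $t$-tuple over $V$ appears as a row at least $\lambda$ times. For positive integers with $2\le t\le ms$, an ordered covering array $OCA_{\lambda}(N;t,m,s,v)$ is an $N\times ms$ array over an alphabet of size $v$ with columns labeled by the elements of $[m\times s]$ such that for every anti-ideal $J$ of size $t$ the set of columns labeled by $J$ is $\lambda$-covered; $OCAN_{\lambda}(t,m,s,v)$ is the smallest $N$ for which an $OCA_{\lambda}(N;t,m,s,v)$ exists. *)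

(* Defs.v *)
From mathcomp Require Import all_boot.
Set Implicit Arguments. Unset Strict Implicit. Unset Printing Implicit Defensive.

(* Columns of an OCA are labelled by the elements of the RT poset [m x s],
   represented 0-based as 'I_(m*s): element x lies in block x %/ s, and
   x <= y in the poset iff x, y lie in the same block and x <= y as integers. *)
Definition rt_le (m s : nat) (x y : 'I_(m * s)) : bool :=
  (x %/ s == y %/ s) && (x <= y).

(* An anti-ideal = complement of a down-closed set = an up-closed set. *)
Definition anti_ideal (m s : nat) (J : {set 'I_(m * s)}) : bool :=
  [forall x, forall y, ((x \in J) && rt_le x y) ==> (y \in J)].

(* Tuples over J
   are represented by full functions f; values of f outside J are irrelevant. *)
Definition lam_covered (lam N n v : nat) (A : {ffun 'I_N * 'I_n -> 'I_v})
    (J : {set 'I_n}) : bool :=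
  [forall f : {ffun 'I_n -> 'I_v},
     lam <= #|[set r : 'I_N | [forall j in J, A (r, j) == f j]]|].

Definition is_OCA (lam N t m s v : nat) (A : {ffun 'I_N * 'I_(m * s) -> 'I_v}) : bool :=
  [forall J : {set 'I_(m * s)}, (anti_ideal J && (#|J| == t)) ==> lam_covered lam A J].

Definition has_OCA (lam t m s v N : nat) : bool :=
  [exists A : {ffun 'I_N * 'I_(m * s) -> 'I_v}, is_OCA lam t A].

(* An OCA always exists: lam copies of all rows of V^(ms). *)
Lemma has_OCA_exists lam t m s v : exists N, has_OCA lam t m s v N.
Proof.
pose F := ({ffun 'I_(m * s) -> 'I_v} : finType).
pose P := (('I_lam * F)%type : finType).
exists #|{: P}|.
apply/existsP.
exists [ffun p : 'I_#|{: P}| * 'I_(m * s) => (enum_val (A := {: P}) p.1).2 p.2].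
apply/forallP => J; apply/implyP => _; apply/forallP => f.
apply: (@leq_trans #|[set r : 'I_#|{: P}| | (enum_val (A := {: P}) r).2 == f]|).
  have -> : [set r : 'I_#|{: P}| | (enum_val (A := {: P}) r).2 == f] =
            [set enum_rank ((i, f) : P) | i : 'I_lam].
    apply/setP => r; rewrite inE; apply/eqP/imsetP.
      move=> H; exists (enum_val (A := {: P}) r).1 => //.
      by rewrite -H -surjective_pairing enum_valK.
    by move=> [i _ ->]; rewrite enum_rankK.
  rewrite card_imset ?card_ord // => i j /enum_rank_inj [].
  done.
apply: subset_leq_card; apply/subsetP => r; rewrite !inE => /eqP H.
by apply/forallP => j; apply/implyP => _; rewrite ffunE H.
Qed.

Definition OCAN (lam t m s v : nat) : nat :=
  ex_minn (has_OCA_exists lam t m s v).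

(* Main.v *)
Require Import Defs.
From mathcomp Require Import all_boot.
Set Implicit Arguments. Unset Strict Implicit. Unset Printing Implicit Defensive.

Lemma fusion_step lam t m s k M (A : {ffun 'I_M.+2 * 'I_(m * s) -> 'I_k.+2}) :
  0 < lam -> 2 <= t -> is_OCA lam t A -> has_OCA lam t m s k.+1 M.
Proof.
move=> lam0 t2 /forallP HA.
pose r1 : 'I_M.+2 := ord0.
pose r2 : 'I_M.+2 := lift ord0 ord0.
pose e (r : 'I_M) : 'I_M.+2 := lift ord0 (lift ord0 r).
have e_inj : injective e by move=> x y /lift_inj /lift_inj.
have eP r : r != r1 -> r != r2 -> exists x, r = e x.
  case: (unliftP ord0 r) => [r'|] -> // _.
  case: (unliftP ord0 r') => [r''|] -> //; first by exists r''.
pose a j := A (r1, j). pose b j := A (r2, j).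
pose h j (x : 'I_k.+2) : 'I_k.+1 := odflt ord0 (unlift (a j) (if x == a j then b j else x)).
have hlift j y : h j (lift (a j) y) = y.
  by rewrite /h eq_sym (negbTE (neq_lift _ _)) liftK.
pose B := [ffun p : 'I_M * 'I_(m*s) => h p.2 (A (e p.1, p.2))].
apply/existsP; exists B; apply/forallP => J; apply/implyP => /andP [aJ /eqP cJ].
have := HA J; rewrite aJ cJ eqxx /= => /forallP covA.
apply/forallP => f.
have [j0 [j1 [j0J j1J j01]]] : exists j0 j1, [/\ j0 \in J, j1 \in J & j0 != j1].
  by apply/card_gt1P; rewrite cJ.
pose f' := [ffun j => lift (a j) (f j)].
pose S := [set r | [forall j in J, A (r, j) == f' j]].
pose C := [set r : 'I_M.+2 | [forall j in J, h j (A (r, j)) == f j]].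
pose T := [set r : 'I_M | [forall j in J, B (r, j) == f j]].
have SC : {subset S <= C}.
  move=> r; rewrite !inE => /forallP H; apply/forallP => j; apply/implyP => jJ.
  by move/implyP: (H j) => /(_ jJ) /eqP ->; rewrite ffunE hlift.
have r1S : r1 \notin S.
  rewrite inE; apply/negP => /forallP /(_ j0) /implyP /(_ j0J).
  by rewrite ffunE (negbTE (neq_lift _ _)).
have fin (phi : 'I_M.+2 -> 'I_M.+2) : {in S &, injective phi} ->
    (forall r, r \in S -> [/\ phi r \in C, phi r != r1 & phi r != r2]) -> lam <= #|T|.
  move=> phii phiP; apply: leq_trans (covA f') _.
  rewrite -(card_in_imset phii) -(card_imset _ e_inj).
  apply: subset_leq_card; apply/subsetP => _ /imsetP [r rS ->].
  have [c1 c2 c3] := phiP r rS; have [x ex] := eP _ c2 c3.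
  rewrite ex; apply: imset_f; rewrite inE; apply/forallP => j; apply/implyP => jJ.
  move: c1; rewrite ex inE => /forallP /(_ j) /implyP /(_ jJ).
  by rewrite ffunE.
have r1C r : r \in S -> r != r1.
  by apply: contraTneq => ->.
case: (boolP (r2 \in S)) => r2S; last first.
  apply: (fin id) => [x y _ _ //|r rS]; split; [exact: SC | exact: r1C |].
  by apply: contraTneq rS => ->.
have bE j : j \in J -> b j = f' j.
  by move=> jJ; move: r2S; rewrite inE => /forallP /(_ j) /implyP /(_ jJ) /eqP.
pose f'' := [ffun j => if j == j0 then a j0 else f' j].
have : 0 < #|[set r | [forall j in J, A (r, j) == f'' j]]| by apply: leq_trans lam0 (covA f'').
case/card_gt0P => rs; rewrite inE => /forallP rsP.
have rsA j : j \in J -> A (rs, j) = f'' j by move=> jJ; apply/eqP; apply: (implyP (rsP j)).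
have rsS : rs \notin S.
  rewrite inE; apply/negP => /forallP /(_ j0) /implyP /(_ j0J).
  by rewrite rsA // !ffunE eqxx (negbTE (neq_lift _ _)).
have rsC : rs \in C.
  rewrite inE; apply/forallP => j; apply/implyP => jJ.
  rewrite rsA // ffunE; case: (eqVneq j j0) => [->|ne]; last by rewrite ffunE hlift.
  by rewrite /h eqxx bE // ffunE liftK.
have rs1 : rs != r1.
  apply/negP => /eqP rsr1; move: (rsA j1 j1J); rewrite rsr1 !ffunE eq_sym (negbTE j01).
  by move/eqP; rewrite (negbTE (neq_lift _ _)).
have rs2 : rs != r2 by apply: contraNneq rsS => ->.
apply: (fin (fun r => if r == r2 then rs else r)).
  move=> x y xS yS /=.
  case: (eqVneq x r2) => [->|xr2]; case: (eqVneq y r2) => [->|yr2] //.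
    by move=> E; rewrite E yS in rsS.
  by move=> E; rewrite -E xS in rsS.
move=> r rS /=; case: eqP => [_|/eqP rr2]; first by split.
by split => //; [exact: SC | exact: r1C].
Qed.

Lemma card_lt_ord n p : p <= n -> #|[set x : 'I_n | x < p]| = p.
Proof.
move=> pn.
have -> : [set x : 'I_n | x < p] = widen_ord pn @: [set: 'I_p].
  apply/setP => x; rewrite inE; apply/idP/imsetP => [xp|[y _ ->]].
    by exists (Ordinal xp) => //; apply: val_inj.
  exact: (ltn_ord y).
have wi : injective (widen_ord pn) by move=> x y E; apply: val_inj; exact: (congr1 val E).
by rewrite (card_imset _ wi) cardsT card_ord.
Qed.

Lemma anti_exists m s t : t <= m * s ->
  exists J : {set 'I_(m * s)}, anti_ideal J && (#|J| == t).
Proof.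
move=> tn; exists (~: [set x : 'I_(m * s) | x < m * s - t]); apply/andP; split.
  apply/forallP => x; apply/forallP => y; apply/implyP => /andP [].
  rewrite !inE -!leqNgt => H /andP [_ xy]; exact: leq_trans H xy.
apply/eqP; move: (cardsC [set x : 'I_(m * s) | x < m * s - t]).
rewrite card_lt_ord ?leq_subr // card_ord => E.
by apply/eqP; rewrite -(eqn_add2l (m * s - t)) E subnK.
Qed.

Theorem theorem1 (lam t m s v : nat) :
  0 < lam -> 0 < t -> 0 < m -> 0 < s -> 0 < v ->
  2 <= t <= m * s ->
  OCAN lam t m s v + 2 <= OCAN lam t m s v.+1.
Proof.
move=> lam0 t0 m0 s0 v0 /andP [t2 tn].
rewrite /OCAN; case: ex_minnP => N HN minN; case: ex_minnP => N' /existsP [A HA] _.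
case: v v0 minN HN A HA => // k _ minN HN A HA.
have [J /andP [aJ /eqP cJ]] := anti_exists tn.
have covA := implyP (forallP HA J); rewrite aJ cJ eqxx in covA.
have /card_gt0P [j0 j0J] : 0 < #|J| by rewrite cJ.
have row (f : {ffun 'I_(m * s) -> 'I_k.+2}) : exists r, A (r, j0) = f j0.
  have := forallP (covA is_true_true) f.
  move=> /(leq_trans lam0) /card_gt0P [r]; rewrite inE => /forallP /(_ j0).
  by rewrite j0J => /eqP; exists r.
have [ra Ea] := row [ffun=> ord0]; have [rb Eb] := row [ffun=> ord_max].
have : 1 < #|'I_N'|.
  apply/card_gt1P; exists ra, rb; split => //; apply/negP => /eqP E.
  by move: Ea; rewrite E Eb !ffunE.
rewrite card_ord; case: N' A HA {covA row ra rb Ea Eb} => [|[|M]] // A HA _.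
rewrite addn2 ltnS; apply: minN; exact: fusion_step lam0 t2 HA.
Qed.
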